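(* Let $n$ be a non-negative integer and let $a,b$ be integers with $\gcd(a,b)=1$, $b\neq 0$ and $b\neq\pm1$. Let $T_N(a,b)=\sum_{k=0}^{\lfloor N/2\rfloor}\binom{N}{k}\binom{N-k}{k}a^k b^{N-2k}$ (the generalized central trinomial coefficient, i.e. the coefficient of $x^N$ in $(x^2+bx+a)^N$). Then $$\omega_b\big(T_{2n}(a,b)\big)=\omega_b\Big(\binom{2n}{n}\Big),\qquad \omega_b\big(T_{2n+1}(a,b)\big)=1+\omega_b\Big((2n+1)\binom{2n}{n}\Big).$$
   Context: For an integer $x$ with $x\neq 0,\pm1$ and a nonzero integer $y$, $\omega_x(y)$ denotes the largest non-negative integer $e$ such that $x^e$ divides $y$. *)

(* Defs.v *)
From mathcomp Require Import all_boot all_order all_algebra.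
Set Implicit Arguments. Unset Strict Implicit. Unset Printing Implicit Defensive.
Import Order.TTheory GRing.Theory Num.Theory.
Local Open Scope ring_scope.

(* omega x y : the largest e such that x^e divides y (intended for
   x <> 0, +-1 and y <> 0).  In that case |x|^e <= |y| forces e <= |y|,
   so the bounded maximum below is exactly the largest such e. *)
Definition omega (x y : int) : nat :=
  \max_(e < `|y|%N.+1 | (x ^+ e %| y)%Z) (e : nat).

Definition T (N : nat) (a b : int) : int :=
  \sum_(k < N./2.+1) ('C(N, k) * 'C(N - k, k))%:Z * a ^+ k * b ^+ (N - 2 * k).

(* Main.v *)
Require Import Defs.
From mathcomp Require Import all_boot all_order all_algebra.
From mathcomp Require Import zify ring.
Set Implicit Arguments. Unset Strict Implicit. Unset Printing Implicit Defensive.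

Lemma dvd_log d m : 0 < d -> 0 < m ->
  (forall p, prime p -> logn p d <= logn p m) -> d %| m.
Proof.
move=> d0 m0 H; apply/dvdn_partP => // p; rewrite mem_primes => /and3P[pp _ _].
by rewrite p_part pfactor_dvdn // H.
Qed.

Lemma exp4_gt j : 0 < j -> j.*2.+1 < 4 ^ j.
Proof.
elim: j => [//|j IH] _; case: j IH => [//|j] IH.
rewrite expnS; have := IH isT; lia.
Qed.

Lemma div_term M j q : 0 < q -> M <= j.*2.+1 -> M %/ q <= 1 + 2 * (j %/ q).
Proof.
move=> q0 hM; rewrite -ltnS -addSn ltnS.
have : M %/ q < (2 * (j %/ q)).+2.
  rewrite ltn_divLR //.
  have := divn_eq j q; have := ltn_pmod j q0.
  set x := j %/ q; set r := j %% q => hr hj. nia.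
lia.
Qed.

Lemma legendre_bound p j d : prime p -> 0 < j -> d <= 1 ->
  logn p (j.*2 + d)`! <= (j.*2 - 1) + 2 * logn p j`!.
Proof.
move=> pp j0 d1; rewrite !logn_fact //.
set M := j.*2 + d.
have p1 : 1 < p by exact: prime_gt1.
have -> : \sum_(1 <= k < j.+1) j %/ p ^ k = \sum_(1 <= k < M.+1) j %/ p ^ k.
  rewrite [RHS](big_cat_nat (n := j.+1)) //=; last by rewrite /M; lia.
  rewrite [X in _ = _ + X]big1_seq ?addn0 // => k /andP[_].
  rewrite mem_index_iota => /andP[hk _]; apply: divn_small.
  exact: leq_trans hk (ltnW (ltn_expl k p1)).
rewrite big_distrr /=.
rewrite (big_cat_nat (n := j.*2)) /=; [|lia|rewrite /M; lia].
rewrite (big_cat_nat (n := j.*2) (P := xpredT) (F := fun i => 2 * (j %/ p ^ i))) /=; [|lia|rewrite /M; lia].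
rewrite [X in X <= _](_ : _ = \sum_(1 <= i < j.*2) M %/ p ^ i + 0); last first.
  congr (_ + _); apply: big1_seq => k /andP[_]; rewrite mem_index_iota => /andP[hk _].
  apply: divn_small.
  have h4 : 4 ^ j <= p ^ k.
    rewrite -[4]/(2^2) -expnM mul2n.
    apply: (@leq_trans (2 ^ k)); first by rewrite leq_pexp2l.
    by rewrite leq_exp2r ?prime_gt1 //; lia.
  have := exp4_gt j0; rewrite /M; lia.
rewrite addn0 addnA; apply: leq_trans (leq_addr _ _).
apply: leq_trans (_ : \sum_(1 <= i < j.*2) (1 + 2 * (j %/ p ^ i)) <= _).
  apply: leq_sum => i _; apply: div_term; first by rewrite expn_gt0 prime_gt0.
  rewrite /M; lia.
by rewrite big_split /= sum_nat_const_nat muln1.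
Qed.


Lemma fact_split N k : k + k <= N ->
  'C(N, k) * 'C(N - k, k) * (k`! * k`! * (N - k - k)`!) = N`!.
Proof.
move=> hk.
rewrite -(bin_fact (_ : k <= N)); last lia.
rewrite -(bin_fact (_ : k <= N - k)); last lia.
ring.
Qed.

Lemma key B e n k j d N D : 0 < B -> 0 < j -> d <= 1 -> k + j = n -> N = n.*2 + d ->
  D * (n`! * n`!) = N`! -> B ^ e %| D ->
  B ^ (e + 1 + d) %| 'C(N, k) * 'C(N - k, k) * B ^ (j.*2 + d).
Proof.
move=> B0 j0 d1 hkj hN hD hBD.
have hkN : k + k <= N by lia.
have c0 : 0 < 'C(N, k) * 'C(N - k, k) by rewrite muln_gt0 !bin_gt0; apply/andP; split; lia.
have D0 : 0 < D.
  rewrite lt0n; apply/eqP=> D0; move: hD; rewrite D0 mul0n => /esym/eqP; by rewrite eqn0Ngt fact_gt0.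
apply: dvd_log; [by rewrite expn_gt0 B0 | by rewrite muln_gt0 c0 expn_gt0 B0|].
move=> p pp.
set c := 'C(N, k) * 'C(N - k, k).
set L := fun x => logn p x`!.
have h1 : logn p c + (L k + L k + L (j.*2 + d)) = L N.
  rewrite /L -!lognM ?c0 ?fact_gt0 ?muln_gt0 ?fact_gt0 //.
  have -> : j.*2 + d = N - k - k by lia.
  by rewrite /c fact_split.
have h2 : logn p D + (L n + L n) = L N.
  by rewrite /L -!lognM ?fact_gt0 ?muln_gt0 ?fact_gt0 ?D0 // hD.
have h3 : L j + L k <= L n.
  rewrite /L -!lognM ?fact_gt0 //.
  rewrite -(bin_fact (_ : j <= n)); last lia.
  have -> : n - j = k by lia.
  rewrite [X in _ <= X]lognM ?fact_gt0 ?muln_gt0 ?fact_gt0 ?bin_gt0 //; last lia.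
  exact: leq_addl.
have h4 : L (j.*2 + d) <= j.*2 - 1 + 2 * L j by apply: legendre_bound.
have h5 : e * logn p B <= logn p D.
  by rewrite -lognX; apply: dvdn_leq_log.
rewrite lognM ?expn_gt0 ?B0 // !lognX.
move: h1 h2 h3 h4 h5; rewrite /L.
set m := logn p B; set x := logn p c; set y := logn p D.
set Lk := logn p k`!; set Lj := logn p j`!; set Ln := logn p n`!; set LN := logn p N`!.
set L2 := logn p (j.*2 + d)`!.
move=> h1 h2 h3 h4 h5.
have [->|m0] := posnP m; first by rewrite !muln0.
have hjm : j + m <= j * m + 1 by nia.
nia.
Qed.


Lemma even_D n : 'C(n.*2, n) * (n`! * n`!) = (n.*2 + 0)`!.
Proof.
have h := bin_fact (leq_addr n n); rewrite addnK addnn in h.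
by rewrite addn0 h.
Qed.

Lemma even_C n : 'C(n.*2 + 0, n) * 'C(n.*2 + 0 - n, n) = 'C(n.*2, n).
Proof. by rewrite addn0 -{2}addnn addnK binn muln1. Qed.

Lemma odd_D n : (n.*2.+1 * 'C(n.*2, n)) * (n`! * n`!) = (n.*2 + 1)`!.
Proof. by rewrite addn1 factS -mulnA even_D addn0. Qed.

Lemma odd_C n : 'C(n.*2 + 1, n) * 'C(n.*2 + 1 - n, n) = n.*2.+1 * 'C(n.*2, n).
Proof.
have e1 : n.*2 + 1 - n = n.+1 by rewrite -addnn addnAC addnK addn1.
rewrite e1 binSn -{1}(bin_sub (_ : n <= n.*2 + 1)); last by rewrite -addnn -addnA leq_addr.
by rewrite e1 mulnC addn1 (mul_bin_diag n.*2.+1 n).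
Qed.

Import Order.TTheory GRing.Theory Num.Theory.
Local Open Scope ring_scope.

Lemma omegaE (x y : int) e : (1 < `|x|)%N -> y != 0 -> (x ^+ e %| y)%Z ->
  ~~ (x ^+ e.+1 %| y)%Z -> omega x y = e.
Proof.
move=> x1 y0 he hne.
have hy : (0 < `|y|)%N by rewrite absz_gt0.
have He : (e < `|y|.+1)%N.
  move: he; rewrite dvdzE abszX => /(dvdn_leq hy) h.
  rewrite ltnS; apply: leq_trans h; apply: ltnW; apply: leq_trans (ltn_expl e x1) _.
  by [].
apply/eqP; rewrite eqn_leq; apply/andP; split.
  apply/bigmax_leqP => i hi; rewrite leqNgt; apply/negP => lt.
  by move/negP: hne; apply; apply: dvdz_trans hi; apply: dvdz_exp2l.
exact: (@leq_bigmax_cond _ _ _ (Ordinal He)).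
Qed.

Lemma omega_ex (x y : int) : (1 < `|x|)%N -> y != 0 ->
  exists e, (x ^+ e %| y)%Z && ~~ (x ^+ e.+1 %| y)%Z.
Proof.
move=> x1 y0; have hy : (0 < `|y|)%N by rewrite absz_gt0.
have ex : exists i, ~~ (x ^+ i %| y)%Z.
  exists `|y|%N; rewrite dvdzE abszX; apply/negP => /(dvdn_leq hy).
  rewrite leqNgt; apply/negP/negPn; apply: leq_trans (ltn_expl _ x1) _.
  by rewrite leq_exp2r ?absz_gt0 // -absz_gt0.
case: (ex_minnP ex) => m hm hmin.
case: m hm hmin => [|m] hm hmin; first by rewrite expr0 dvd1z in hm.
exists m; rewrite hm andbT; apply/negPn/negP => /hmin; rewrite ltnn.
by [].
Qed.

Lemma main_int (a b D R : int) (e d n : nat) : coprimez a b -> (1 < `|b|)%N ->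
  (b ^+ e %| D)%Z -> ~~ (b ^+ e.+1 %| D)%Z -> (b ^+ (e + 1 + d) %| R)%Z ->
  D * a ^+ n * b ^+ d + R != 0 /\ omega b (D * a ^+ n * b ^+ d + R) = (e + d)%N.
Proof.
move=> cab b1 he hne hR.
have b0 : b != 0 by rewrite -absz_gt0; apply: ltnW.
have hnot : ~~ (b ^+ (e + 1 + d) %| D * a ^+ n * b ^+ d)%Z.
  apply/negP; rewrite exprD (dvdz_mul2r (expf_neq0 d b0)).
  rewrite dvdzE !abszM !abszX addn1 Gauss_dvdl.
    by move/negP: hne; rewrite dvdzE abszX.
  by apply: coprimeXl; apply: coprimeXr; rewrite coprime_sym.
have hT : ~~ (b ^+ (e + 1 + d) %| D * a ^+ n * b ^+ d + R)%Z.
  by apply/negP => h; move/negP: hnot; apply; rewrite -(rpredDr _ hR).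
split.
  by apply/negP => /eqP h; move: hT; rewrite h dvdz0.
apply: omegaE => //.
  by apply/negP => /eqP h; move: hT; rewrite h dvdz0.
  apply: rpredD; last by apply: dvdz_trans hR; apply: dvdz_exp2l; lia.
  rewrite exprD; apply: dvdz_mul => //; exact: dvdz_mulr.
by rewrite -addSn -addn1.
Qed.


Lemma T_main n d (a b : int) (D e : nat) : (d <= 1)%N -> coprimez a b -> (1 < `|b|)%N ->
  (D * (n`! * n`!) = (n.*2 + d)`!)%N ->
  ('C(n.*2 + d, n) * 'C(n.*2 + d - n, n) = D)%N ->
  (b ^+ e %| D%:Z)%Z -> ~~ (b ^+ e.+1 %| D%:Z)%Z ->
  T (n.*2 + d) a b != 0 /\ omega b (T (n.*2 + d) a b) = (e + d)%N.
Proof.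
move=> d1 cab b1 hD hC he hne.
have hh : (n.*2 + d)./2 = n.
  by case: d d1 {hD hC} => [|[|//]] _; rewrite ?addn0 ?addn1 ?doubleK //= uphalf_double.
rewrite /T hh big_ord_recr /= addrC.
have -> : (n.*2 + d - 2 * n)%N = d by lia.
rewrite hC; apply: main_int => //.
apply: rpred_sum => i _ /=.
rewrite mulrAC; apply: dvdz_mulr.
rewrite dvdzE abszM abszX !absz_nat.
have -> : (n.*2 + d - 2 * i)%N = ((n - i).*2 + d)%N by have := ltn_ord i; lia.
rewrite abszX; apply: (@key _ _ n _ _ _ _ D) => //.
- by apply: ltnW.
- by rewrite subn_gt0.
- by rewrite subnKC // ltnW.
- by move: he; rewrite dvdzE abszX.
Qed.

Unset Implicit Arguments. Set Strict Implicit.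

Theorem theorem8 (n : nat) (a b : int)
  (hab : coprimez a b) (hb0 : b != 0) (hb1 : b != 1) (hbm1 : b != -1) :
  [/\ T n.*2 a b != 0, T n.*2.+1 a b != 0,
      omega b (T n.*2 a b) = omega b ('C(n.*2, n))%:Z
    & omega b (T n.*2.+1 a b) = (1 + omega b ((n.*2.+1 * 'C(n.*2, n))%N)%:Z)%N].
Proof.
have b1 : (1 < `|b|)%N.
  by move: hb0 hb1 hbm1; clear; case: b => [[|[|m]]|[|m]].
have hC0 : (0 < 'C(n.*2, n))%N by rewrite bin_gt0 -addnn leq_addr.
have D0 : ('C(n.*2, n))%:Z != 0 by rewrite -absz_gt0.
have D1 : ((n.*2.+1 * 'C(n.*2, n))%N)%:Z != 0 by rewrite -absz_gt0 absz_nat muln_gt0 hC0.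
have [e0 /andP[he0 hne0]] := omega_ex b1 D0.
have [e1 /andP[he1 hne1]] := omega_ex b1 D1.
have [T0 O0] : T (n.*2 + 0) a b != 0 /\ omega b (T (n.*2 + 0) a b) = (e0 + 0)%N.
  exact: (@T_main n 0 a b ('C(n.*2, n)) e0 isT hab b1 (even_D n) (even_C n) he0 hne0).
have [T1 O1] : T (n.*2 + 1) a b != 0 /\ omega b (T (n.*2 + 1) a b) = (e1 + 1)%N.
  exact: (@T_main n 1 a b (n.*2.+1 * 'C(n.*2, n)) e1 isT hab b1 (odd_D n) (odd_C n) he1 hne1).
rewrite addn0 in T0 O0; rewrite addn1 in T1 O1.
split => //.
- by rewrite O0 (omegaE b1 D0 he0 hne0) addn0.
- by rewrite O1 (omegaE b1 D1 he1 hne1) addnC.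
Qed.
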